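(* Let $V$ be an irreducible Harish-Chandra $\mathcal G$-module. Suppose there exist a $\mathbb Z$-basis $\{\boldsymbol\alpha_1,\dots,\boldsymbol\alpha_n\}$ of $\mathbb Z^n$ and a nonzero weight vector $v\in V$ such that $\mathcal G_{\boldsymbol\alpha_i}v=0$ for all $i=1,\dots,n$. Then $V$ is a GHW module up to a change of coordinates: i.e., there is $k\in\mathbb N$ such that $\mathcal G_{\mathbf m}v=0$ for all $\mathbf m=\sum_{i}m_i\boldsymbol\alpha_i$ with $m_i\ge k$ for every $i$ (equivalently, after twisting $V$ by the automorphism $T_A$ with $A\boldsymbol\alpha_i$-coordinates sending $\boldsymbol\alpha_i$ to $\mathbf e_i$, $V$ is a GHW module).
   Context: $n\ge 2$. $\mathcal A_n=\mathbb C[t_1^{\pm1},\dots,t_n^{\pm1}]$, $t^{\mathbf m}=t_1^{m_1}\cdots t_n^{m_n}$, $d_j=t_j\frac{\partial}{\partial t_j}$, $(\mathbf u|\mathbf v)=\sum_iu_iv_i$, $D(\mathbf u,\mathbf r)=\sum_iu_it^{\mathbf r}d_i$. $\mathcal D_n=\mathrm{span}\{D(\mathbf u,\mathbf r):(\mathbf u|\mathbf r)=0\}$ with $[D(\mathbf p,\mathbf m),D(\mathbf q,\mathbf k)]=D((\mathbf p|\mathbf k)\mathbf q-(\mathbf q|\mathbf m)\mathbf p,\mathbf m+\mathbf k)$; $\mathcal G=\mathcal D_n\ltimes\mathcal A_n$ with $[D(\mathbf u,\mathbf r),t^{\mathbf m}]=(\mathbf u|\mathbf m)t^{\mathbf r+\mathbf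 m}$, $[t^{\mathbf r},t^{\mathbf m}]=0$. Grading: $\mathcal G_{\mathbf m}=\mathrm{span}\{D(\mathbf u,\mathbf m):(\mathbf u|\mathbf m)=0\}\oplus\mathbb Ct^{\mathbf m}$ ($\mathbf m\ne\mathbf 0$), $\mathcal G_{\mathbf 0}=\mathrm{span}\{d_j\}\oplus\mathbb Ct^{\mathbf 0}$. Harish-Chandra module: weight module for $\mathcal H=\mathrm{span}\{d_j\}$ with finite-dimensional weight spaces. GHW module: there are a nonzero weight vector $v$ and $k\in\mathbb N$ with $\mathcal G_{\mathbf m}v=0$ for all $\mathbf m\ge(k,\dots,k)$ componentwise. For $A\in GL_n(\mathbb Z)$, $T_A$ is the automorphism $D(\mathbf u,\mathbf r)\mapsto D((A^T)^{-1}\mathbf u,A\mathbf r)$, $t^{\mathbf r}\mapsto t^{A\mathbf r}$. *)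

(* Defs.v *)
From mathcomp Require Import all_boot all_algebra.
From mathcomp Require Import complex.
From mathcomp Require Import Rstruct.
Set Implicit Arguments. Unset Strict Implicit. Unset Printing Implicit Defensive.
Import GRing.Theory.
Local Open Scope ring_scope.

Definition C : numClosedFieldType := complex Rdefinitions.R.

Definition pairCZ (n : nat) (u : 'rV[C]_n) (m : 'rV[int]_n) : C :=
  \sum_(i < n) u 0 i * (m 0 i)%:~R.

Definition evec (n : nat) (j : 'I_n) : 'rV[C]_n := \row_(i < n) (i == j)%:R.

(* A representation of G = D_n |x A_n on the C-vector space V.
   G has the basis-free presentation: for each r in Z^n, the elements
   D(u,r) (u in C^n, (u|r)=0), depending linearly on u (injectively), and
   t^r; G is the direct sum over r of these.  Hence a G-module structure on
   V is exactly the data of operators actD u r = action of D(u,r)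
   (meaningful for (u|r)=0) and actT r = action of t^r, all C-linear on V,
   actD linear in u on {u | (u|r)=0}, satisfying the bracket relations. *)
Record Gmodule (n : nat) (V : lmodType C) := {
  actD : 'rV[C]_n -> 'rV[int]_n -> V -> V ;
  actT : 'rV[int]_n -> V -> V ;
  actD_lin : forall u r (a : C) (x y : V),
      actD u r (a *: x + y) = a *: actD u r x + actD u r y ;
  actT_lin : forall r (a : C) (x y : V),
      actT r (a *: x + y) = a *: actT r x + actT r y ;
  actD_linu : forall u w r (a : C) (x : V),
      pairCZ u r = 0 -> pairCZ w r = 0 ->
      actD (a *: u + w) r x = a *: actD u r x + actD w r x ;
  brDD : forall p m q k (x : V), pairCZ p m = 0 -> pairCZ q k = 0 ->
      actD p m (actD q k x) - actD q k (actD p m x) =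
      actD (pairCZ p k *: q - pairCZ q m *: p) (m + k) x ;
  brDT : forall u r m (x : V), pairCZ u r = 0 ->
      actD u r (actT m x) - actT m (actD u r x) =
      pairCZ u m *: actT (r + m) x ;
  brTT : forall r m (x : V), actT r (actT m x) = actT m (actT r x)
}.

Section Defs.
Variables (n : nat) (V : lmodType C) (M : Gmodule n V).

Definition act_d (j : 'I_n) : V -> V := actD M (evec j) 0.

Definition in_weight_space (lambda : 'rV[C]_n) (v : V) : Prop :=
  forall j : 'I_n, act_d j v = lambda 0 j *: v.

Definition weight_vector (v : V) : Prop :=
  exists lambda, in_weight_space lambda v.

Definition weight_module : Prop :=
  forall v : V, exists s : seq V,
    (forall w, w \in s -> weight_vector w) /\ v = \sum_(w <- s) w.

Definition finite_dim_weight_spaces : Prop :=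
  forall lambda, exists s : seq V, forall v, in_weight_space lambda v ->
    exists c : 'I_(size s) -> C, v = \sum_(i < size s) c i *: s`_i.

Definition harish_chandra : Prop :=
  weight_module /\ finite_dim_weight_spaces.

Definition submodule (P : V -> Prop) : Prop :=
  [/\ P 0, (forall (a : C) x y, P x -> P y -> P (a *: x + y)),
      (forall u r x, pairCZ u r = 0 -> P x -> P (actD M u r x)) &
      (forall r x, P x -> P (actT M r x))].

Definition irreducible : Prop :=
  (exists v : V, v != 0) /\
  forall P, submodule P -> (forall x, P x -> x = 0) \/ (forall x, P x).

(* G_m v = 0, where G_m = span{D(u,m) : (u|m)=0} + C t^m
   (for m = 0 this is span{d_j} + C t^0, since D(u,0) = sum u_i d_i) *)
Definition kills (m : 'rV[int]_n) (v : V) : Prop :=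
  (forall u, pairCZ u m = 0 -> actD M u m v = 0) /\ actT M m v = 0.

End Defs.

(* Main.v *)
Require Import Defs.
From mathcomp Require Import all_boot all_algebra.
Local Open Scope ring_scope.
Import GRing.Theory Num.Theory. From mathcomp Require Import order. Import Order.TTheory.

Section Aux.
Variables (n : nat) (V : lmodType C) (M : Gmodule n V).

Lemma actD0 u r : actD M u r 0 = 0.
Proof.
have := actD_lin M u r 1 0 0; rewrite scaler0 addr0 scale1r => H.
by move/(congr1 (fun x => x - actD M u r 0)): H; rewrite subrr addrK.
Qed.

Lemma actT0 r : actT M r 0 = 0.
Proof.
have := actT_lin M r 1 0 0; rewrite scaler0 addr0 scale1r => H.
by move/(congr1 (fun x => x - actT M r 0)): H; rewrite subrr addrK.
Qed.

Lemma pairCZ_lin (a : C) (u w : 'rV[C]_n) r : pairCZ (a *: u + w) r = a * pairCZ u r + pairCZ w r.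
Proof.
rewrite /pairCZ mulr_sumr -big_split /=; apply: eq_bigr => i _.
by rewrite !mxE mulrDl mulrA.
Qed.

Lemma pairCZ_add (u : 'rV[C]_n) r m : pairCZ u (r + m) = pairCZ u r + pairCZ u m.
Proof.
rewrite /pairCZ -big_split /=; apply: eq_bigr => i _.
by rewrite !mxE intrD mulrDr.
Qed.

Lemma core v m k p : kills M m v -> kills M k v ->
  pairCZ p m = 0 -> pairCZ p k = 1 -> kills M (m + k) v.
Proof.
move=> [Dm Tm] [Dk Tk] hpm hpk; split.
  move=> w hw.
  set q := (pairCZ w m) *: p + w.
  have hq : pairCZ q k = 0.
    by rewrite /q pairCZ_lin hpk mulr1 -pairCZ_add.
  have hqm : pairCZ q m = pairCZ w m.
    by rewrite /q pairCZ_lin hpm mulr0 add0r.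
  have := brDD M v hpm hq.
  rewrite Dk // Dm // actD0 actD0 subrr hpk hqm scale1r /q addrAC subrr add0r.
  idtac.
  by move=> <-.
have := brDT M k v hpm.
by rewrite Tk Dm // actD0 actT0 subrr hpk scale1r => <-.
Qed.
End Aux.

Lemma pairCZE n (p : 'rV[C]_n) (x : 'rV[int]_n) :
  pairCZ p x = (map_mx (intr : int -> C) x *m p^T) 0 0.
Proof. rewrite /pairCZ mxE; apply: eq_bigr => i _; by rewrite !mxE mulrC. Qed.

Lemma indep n (A : 'M[int]_n) (d : 'rV[int]_n) (j l : 'I_n) :
  A \in unitmx -> l != j -> d 0 l != 0 ->
  exists p : 'rV[C]_n, pairCZ p (d *m A) = 0 /\ pairCZ p (row j A) = 1.
Proof.
move=> uA lj dl.
set f := (intr : int -> C).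
set B := map_mx f (invmx A).
have AB : map_mx f A *m B = 1%:M by rewrite -map_mxM mulmxV // map_mx1.
set g : 'cV[C]_n := delta_mx j 0 - ((f (d 0 j)) / f (d 0 l)) *: delta_mx l 0.
have fdl : f (d 0 l) != 0 by rewrite /f intr_eq0.
exists (B *m g)^T; rewrite !pairCZE trmxK; split.
  rewrite map_mxM -mulmxA (mulmxA _ B) AB mul1mx.
  rewrite mulmxBr -scalemxAr -!colE !mxE divfK //. 
  by rewrite subrr.
rewrite rowE map_mxM map_delta_mx -mulmxA (mulmxA _ B) AB mul1mx.
rewrite -rowE !mxE eqxx eq_sym (negbTE lj) mulr0 subr0.
by [].
Qed.

Section Main.
Variables (n : nat) (hn : (2 <= n)%N) (V : lmodType C) (M : Gmodule n V)
  (A : 'M[int]_n) (v : V) (uA : A \in unitmx)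
  (hrow : forall i : 'I_n, kills M (row i A) v).

Let K m := kills M m v.

Lemma stepK (d : 'rV[int]_n) (i : 'I_n) :
  (exists l, l != i /\ d 0 l != 0) -> K (d *m A) -> K ((d + delta_mx 0 i) *m A).
Proof.
move=> [l [li dl]] Kd; have [p [h1 h2]] := @indep n A d i l uA li dl.
rewrite mulmxDl -rowE. exact: (@core n V M v _ _ p Kd (hrow i) h1 h2).
Qed.

Lemma other (i : 'I_n) : exists l : 'I_n, l != i.
Proof.
have h0 : (0 < n)%N by apply: leq_trans hn.
have h1 : (1 < n)%N by [].
case: (eqVneq i (Ordinal h0)) => [->|ne]; last by exists (Ordinal h0); rewrite eq_sym.
by exists (Ordinal h1).
Qed.

Lemma iterK (d : 'rV[int]_n) (j : 'I_n) (t : nat) :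
  (forall l, 1 <= d 0 l) -> K (d *m A) -> K ((d + delta_mx 0 j *+ t) *m A).
Proof.
move=> hd Kd; elim: t => [|t IH]; first by rewrite mulr0n addr0.
rewrite mulrSr addrA; apply: stepK => //.
have [l lj] := other j; exists l; split => //.
rewrite !(mxE, mulmxnE) (negbTE lj) andbF mul0rn addr0.
by apply: lt0r_neq0; apply: lt_le_trans (hd l).
Qed.

Definition ind (r : nat) : 'rV[int]_n := \row_(i < n) ((i < r)%N)%:R.

Lemma phase1 (r : nat) : (0 < r)%N -> (r <= n)%N -> K (ind r *m A).
Proof.
have h0 : (0 < n)%N by apply: leq_trans hn.
elim: r => [//|r IH] _ hr.
case: r IH hr => [_ _|r IH hr].
  have -> : ind 1 = delta_mx 0 (Ordinal h0).
    by apply/rowP => i; rewrite !mxE /=; case: i => [[|i] hi].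
  rewrite -rowE; exact: hrow.
have hr' : (r.+1 < n)%N by [].
have -> : ind r.+2 = ind r.+1 + delta_mx 0 (Ordinal hr').
  apply/rowP => i; rewrite !mxE /=; case: i => i hi /=.
  have -> : (Ordinal hi == Ordinal hr') = (i == r.+1) by [].
  rewrite ltnS leq_eqVlt; case: (ltngtP i r.+1) => //= _; rewrite ?addr0 ?add0r //.
apply: stepK; last by apply: IH => //; apply: ltnW.
by exists (Ordinal h0); split; rewrite // !mxE.
Qed.

Lemma phase2 (r : nat) : (r <= n)%N -> forall c : 'rV[int]_n,
  (forall i, 1 <= c 0 i) -> (forall i : 'I_n, (r <= i)%N -> c 0 i = 1) ->
  K (c *m A).
Proof.
elim: r => [_|r IH hr] c hc1 hc2.
  have -> : c = ind n by apply/rowP => i; rewrite !mxE hc2 // ltn_ord.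
  by apply: phase1 => //; apply: leq_trans hn.
set ir := Ordinal hr.
set c' := c + (1 - c 0 ir) *: delta_mx 0 ir.
have hc' : forall i, c' 0 i = if i == ir then 1 else c 0 i.
  move=> i; rewrite !mxE; case: (eqVneq i ir) => [->|ne]; last by rewrite mulr0 addr0.
  by rewrite mulr1 addrC subrK.
have Kc' : K (c' *m A).
  apply: IH; first by apply: ltnW.
    by move=> i; rewrite hc'; case: (i == ir).
  move=> i hi; rewrite hc'; case: (eqVneq i ir) => // ne; apply: hc2.
  by rewrite ltn_neqAle hi andbT; apply: contra ne => /eqP e; apply/eqP/val_inj.
have ht : 0 <= c 0 ir - 1 by rewrite subr_ge0.
have -> : c = c' + delta_mx 0 ir *+ (absz (c 0 ir - 1)%R).
  apply/rowP => i; rewrite mxE [c' 0 i]hc' !(mxE, mulmxnE); case: (eqVneq i ir) => [->|ne].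
    by rewrite /= mulr1n natz gez0_abs // addrC subrK.
  by rewrite /= mul0rn addr0.
apply: iterK => // i; rewrite hc'; case: (i == ir) => //.
Qed.
End Main.

Theorem lemma4p2 (n : nat) (hn : (2 <= n)%N) (V : lmodType C)
    (M : Gmodule n V) (A : 'M[int]_n) (v : V) :
  irreducible M -> harish_chandra M ->
  A \in unitmx ->
  v != 0 -> weight_vector M v ->
  (forall i : 'I_n, kills M (row i A) v) ->
  exists k : nat, forall c : 'rV[int]_n,
    (forall i : 'I_n, (k%:Z <= c 0 i)%R) -> kills M (c *m A) v.
Proof.
move=> _ _ uA _ _ hrow; exists 1%N => c hc.
apply: (@phase2 n hn V M A v uA hrow n (leqnn n) c hc) => i hi.
by move: (ltn_ord i); rewrite ltnNge hi.
Qed.
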